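(* In a RiFle assignment game, the set of stable payoffs (viewed as a subset of $\mathbb R^n\times\mathbb R^n$) is compact.
   Context: A RiFle assignment game consists of two disjoint sets of agents $P=\{p_1,\dots,p_n\}$ and $Q=\{q_1,\dots,q_n\}$, a pair of nonnegative real numbers $(\beta_{ij},\gamma_{ij})$ for every pair $(p_i,q_j)\in P\times Q$ (write $\alpha_{ij}=\beta_{ij}+\gamma_{ij}$), and a designation of every agent as rigid or flexible. Let $\mathcal R$ be the set of pairs with at least one rigid agent and $\mathcal F$ the set of pairs with both agents flexible. An outcome $(\bar u,\bar v;\mu)$ consists of a matching $\mu$ between $P$ and $Q$ (write $p_i\stackrel{\mu}{\longleftrightarrow} q_j$) and payoff vectors $\bar u,\bar v\in\mathbb R^n$. It is feasible if: (1) $u_i\ge0$, $v_j\ge0$; (2) if a rigid $p_i$ is matched to $q_j$ then $u_i=\beta_{ij}$ and, if $q_j$ is flexible, $v_j\ge\gamma_{ij}$; symmetrically for a rigid $q_j$ matched to $p_i$: $v_j=\gamma_{ij}$ and, if $p_i$ is flexible, $u_i\ge\beta_{ij}$; (3) $\sum_iu_i+\sum_jv_j=\sum_{p_i\stackrel{\mu}{\longleftrightarrow}q_j}\alpha_{ij}$. It is stable if feasible and $u_i+v_j\ge\alpha_{ij}$ for $(p_i,q_j)\in\mathcal F$ and ($u_i\ge\beta_{ij}$ or $v_j\ge\gamma_{ij}$) for $(p_i,q_j)\in\mathcal R$. A payoff $(\bar u,\bar v)$ is stable if $(\bar u,\bar v;\mu)$ is a stable outcome for some matching $\mu$. *)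

(* Defs.v *)
From HB Require Import structures.
From mathcomp Require Import all_boot all_order all_algebra all_fingroup.
From mathcomp Require Import all_classical all_reals all_analysis.
Set Implicit Arguments. Unset Strict Implicit. Unset Printing Implicit Defensive.
Import Order.TTheory GRing.Theory Num.Theory.
Local Open Scope ring_scope.
Local Open Scope classical_set_scope.

(* A RiFle assignment game with agents p_1..p_n (indexed by 'I_n) and q_1..q_n (indexed by 'I_n). *)
Record rifle_game (R : realType) (n : nat) := RiFle {
  beta : 'I_n -> 'I_n -> R;
  gamma : 'I_n -> 'I_n -> R;
  beta_ge0 : forall i j, 0 <= beta i j;
  gamma_ge0 : forall i j, 0 <= gamma i j;
  rigidP : 'I_n -> bool;
  rigidQ : 'I_n -> bool
}.

Definition alpha (R : realType) (n : nat) (G : rifle_game R n) (i j : 'I_n) : R :=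
  beta G i j + gamma G i j.

(* pair (p_i, q_j) is in F iff both are flexible; otherwise it is in R *)
Definition flexible_pair (R : realType) (n : nat) (G : rifle_game R n) (i j : 'I_n) : bool :=
  ~~ rigidP G i && ~~ rigidQ G j.

(* A matching between P and Q is a bijection mu : p_i <-> q_(mu i). *)
Definition feasible (R : realType) (n : nat) (G : rifle_game R n)
    (u v : 'rV[R]_n) (mu : {perm 'I_n}) : Prop :=
  [/\ (forall i, 0 <= u ord0 i) /\ (forall j, 0 <= v ord0 j),
      (forall i, rigidP G i ->
         u ord0 i = beta G i (mu i) /\
         (~~ rigidQ G (mu i) -> gamma G i (mu i) <= v ord0 (mu i))),
      (forall i, rigidQ G (mu i) ->
         v ord0 (mu i) = gamma G i (mu i) /\
         (~~ rigidP G i -> beta G i (mu i) <= u ord0 i)) &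
      \sum_(i < n) u ord0 i + \sum_(j < n) v ord0 j = \sum_(i < n) alpha G i (mu i)].

Definition stable (R : realType) (n : nat) (G : rifle_game R n)
    (u v : 'rV[R]_n) (mu : {perm 'I_n}) : Prop :=
  feasible G u v mu /\
  forall i j,
    (flexible_pair G i j -> alpha G i j <= u ord0 i + v ord0 j) /\
    (~~ flexible_pair G i j -> beta G i j <= u ord0 i \/ gamma G i j <= v ord0 j).

Definition stable_payoffs (R : realType) (n : nat) (G : rifle_game R n)
  : set ('rV[R]_n * 'rV[R]_n) :=
  [set uv | exists mu : {perm 'I_n}, stable G uv.1 uv.2 mu].

(* Main.v *)
Require Import Defs.
From HB Require Import structures.
From mathcomp Require Import all_boot all_order all_algebra all_fingroup.
From mathcomp Require Import all_classical all_reals all_analysis.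

Import numFieldNormedType.Exports.
Import Order.TTheory GRing.Theory Num.Theory.
Local Open Scope ring_scope.
Local Open Scope classical_set_scope.

Section H.
Context {R : realType} {n : nat}.
Notation T := ('rV[R]_n * 'rV[R]_n)%type.

Lemma cont_u (i : 'I_n) : continuous (fun x : T => x.1 ord0 i).
Proof.
move=> x; apply: (continuous_comp (f := fst) (g := fun M : 'rV[R]_n => M ord0 i)).
  exact: cvg_fst.
exact: coord_continuous.
Qed.

Lemma cont_v (i : 'I_n) : continuous (fun x : T => x.2 ord0 i).
Proof.
move=> x; apply: (continuous_comp (f := snd) (g := fun M : 'rV[R]_n => M ord0 i)).
  exact: cvg_snd.
exact: coord_continuous.
Qed.

Lemma cont_sum (I : Type) (s : seq I) (f : I -> T -> R) :
  (forall i, continuous (f i)) -> continuous (fun x => \sum_(i <- s) f i x).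
Proof.
move=> hf; elim: s => [|a s IH].
  have -> : (fun x : T => \sum_(i <- [::]) f i x) = (fun=> 0) by apply: funext => x; rewrite big_nil.
  exact: cst_continuous.
have -> : (fun x : T => \sum_(i <- a :: s) f i x) = (f a + fun x => \sum_(i <- s) f i x)
  by apply: funext => x; rewrite big_cons.
by move=> x; apply: continuousD; [exact: hf | exact: IH].
Qed.

Lemma closed_lef {f g : T -> R} : continuous f -> continuous g ->
  closed [set x | f x <= g x].
Proof.
move=> cf cg.
have -> : [set x | f x <= g x] = (g - f) @^-1` [set y : R | 0 <= y].
  by apply: funext => x; apply: propext; rewrite /= subr_ge0.
apply: preimage_closed; last exact: closed_ge.
by move=> x _; apply: continuousB; [exact: cg | exact: cf].
Qed.

Lemma cl_le {A : set T} {f g : T -> R} : continuous f -> continuous g ->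
  (forall y, A y -> f y <= g y) -> forall x, closure A x -> f x <= g x.
Proof.
move=> cf cg hA x hx.
have hc := closed_lef cf cg.
have : closure [set x | f x <= g x] x by exact: (closure_subset hA).
by rewrite -(proj1 (closure_id _) hc).
Qed.

Lemma cl_or {A : set T} {f g f' g' : T -> R} : continuous f -> continuous g ->
  continuous f' -> continuous g' ->
  (forall y, A y -> f y <= g y \/ f' y <= g' y) -> forall x, closure A x -> f x <= g x \/ f' x <= g' x.
Proof.
move=> cf cg cf' cg' hA x hx.
have hc := closedU (closed_lef cf cg) (closed_lef cf' cg').
have : closure ([set x | f x <= g x] `|` [set x | f' x <= g' x]) x by exact: (closure_subset hA).
by rewrite -(proj1 (closure_id _) hc).
Qed.

Lemma le_sum1 (F : 'I_n -> R) k : (forall i, 0 <= F i) -> F k <= \sum_i F i.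
Proof.
move=> h; rewrite (bigD1 k) //= lerDl; apply: sumr_ge0 => i _; exact: h.
Qed.

End H.

Theorem lemma4 (R : realType) (n : nat) (G : rifle_game R n) :
  compact (stable_payoffs G).
Proof.
set M := \sum_i \sum_j alpha G i j.
set K := [set v : 'rV[R]_n | forall i, `[0, M]%classic (v ord0 i)].
have Kc : compact K by apply: (@rV_compact R n (fun=> `[0, M]%classic)) => i; exact: segment_compact.
have aP : forall i j, 0 <= alpha G i j by move=> i j; rewrite addr_ge0 // ?beta_ge0 ?gamma_ge0.
have cu := @cont_u R n; have cv := @cont_v R n.
have cc : forall c : R, continuous (fun _ : ('rV[R]_n * 'rV[R]_n)%type => c) by move=> c; exact: cst_continuous.
have sub : stable_payoffs G `<=` K `*` K.
  move=> [u v] [mu [[[u0 v0] _ _ hs] _]] /=.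
  have hb : \sum_i u ord0 i + \sum_j v ord0 j <= M.
    rewrite hs; apply: ler_sum => i _; apply: le_sum1 => j; exact: aP.
  have su : 0 <= \sum_i u ord0 i by apply: sumr_ge0.
  have sv : 0 <= \sum_i v ord0 i by apply: sumr_ge0.
  split => i /=; rewrite in_itv /= ?u0 ?v0 /=.
  + apply: le_trans hb; apply: le_trans (@le_sum1 R n (fun j => u ord0 j) i u0) _; by rewrite lerDl.
  + apply: le_trans hb; apply: le_trans (@le_sum1 R n (fun j => v ord0 j) i v0) _; by rewrite lerDr.
suff cl : closed (stable_payoffs G) by exact: (subclosed_compact cl (compact_setX Kc Kc) sub).
have -> : stable_payoffs G = \bigcup_(mu in [set: {perm 'I_n}])
     [set uv | stable G uv.1 uv.2 mu].
  apply: funext => uv; apply: propext; split.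
    by move=> [mu h]; exists mu.
  by move=> [mu _ h]; exists mu.
apply: closed_bigcup; first exact: finite_finset.
move=> mu _ x hx.
set A := [set uv | stable G uv.1 uv.2 mu] in hx.
split; first split.
- split => i.
    by apply: (cl_le (cc 0) (cu i) _ _ hx) => y [[[h _] _ _ _] _].
  by apply: (cl_le (cc 0) (cv i) _ _ hx) => y [[[_ h] _ _ _] _].
- move=> i hi; split.
    apply/le_anti/andP; split.
      by apply: (cl_le (cu i) (cc _) _ _ hx) => y [[_ h _ _] _]; rewrite (proj1 (h i hi)).
    by apply: (cl_le (cc _) (cu i) _ _ hx) => y [[_ h _ _] _]; rewrite (proj1 (h i hi)).
  move=> hq.
  by apply: (cl_le (cc _) (cv (mu i)) _ _ hx) => y [[_ h _ _] _]; exact: (proj2 (h i hi) hq).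
- move=> i hi; split.
    apply/le_anti/andP; split.
      by apply: (cl_le (cv (mu i)) (cc _) _ _ hx) => y [[_ _ h _] _]; rewrite (proj1 (h i hi)).
    by apply: (cl_le (cc _) (cv (mu i)) _ _ hx) => y [[_ _ h _] _]; rewrite (proj1 (h i hi)).
  move=> hq.
  by apply: (cl_le (cc _) (cu i) _ _ hx) => y [[_ _ h _] _]; exact: (proj2 (h i hi) hq).
- have cs1 : continuous (fun y : ('rV[R]_n * 'rV[R]_n)%type => \sum_(i < n) y.1 ord0 i)
    by apply: cont_sum.
  have cs2 : continuous (fun y : ('rV[R]_n * 'rV[R]_n)%type => \sum_(i < n) y.2 ord0 i)
    by apply: cont_sum.
  have cs : continuous (fun y : ('rV[R]_n * 'rV[R]_n)%type =>
     \sum_(i < n) y.1 ord0 i + \sum_(j < n) y.2 ord0 j).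
    by move=> y; apply: (continuousD (cs1 y) (cs2 y)).
  apply/le_anti/andP; split.
    by apply: (cl_le cs (cc _) _ _ hx) => y [[_ _ _ h] _]; rewrite h.
  by apply: (cl_le (cc _) cs _ _ hx) => y [[_ _ _ h] _]; rewrite h.
- move=> i j; split.
    move=> hf.
    have cs : continuous (fun y : ('rV[R]_n * 'rV[R]_n)%type => y.1 ord0 i + y.2 ord0 j).
      by move=> y; apply: (continuousD (cu i y) (cv j y)).
    by apply: (cl_le (cc _) cs _ _ hx) => y [_ h]; exact: (proj1 (h i j) hf).
  move=> hf.
  by apply: (cl_or (cc _) (cu i) (cc _) (cv j) _ _ hx) => y [_ h]; exact: (proj2 (h i j) hf).
Qed.
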